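(* Let $d\ge1$ and let $p,q\in[0,1]$ satisfy $p\ge\sqrt{2qd}$. Let $u_0,\dots,u_{d-1}$, $v_0,\dots,v_{d-1}$ be $\mathrm{Bern}(p)$ random variables and $x_0,\dots,x_{d^2-1}$ be $\mathrm{Bern}(q)$ random variables, all mutually independent. Then for every subset $S\subseteq\{0,1,\dots,d^2-1\}$, $$\mathbb{P}\Big(\sum_{i\in S}u_{\lfloor i/d\rfloor}\,v_{i\bmod d}=0\Big)\le\mathbb{P}\Big(\sum_{i\in S}x_i=0\Big).$$
   Context: $\mathrm{Bern}(p)$ denotes the distribution on $\{0,1\}$ taking value $1$ with probability $p$. *)

(* Defs.v *)
From HB Require Import structures.
From mathcomp Require Import all_boot all_order all_algebra.
From mathcomp Require Import reals.
Set Implicit Arguments. Unset Strict Implicit. Unset Printing Implicit Defensive.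
Import Order.TTheory GRing.Theory Num.Theory.
Local Open Scope ring_scope.

(* Probability weight of an outcome w of |I| mutually independent Bern(p)
   variables (w i is the value of the i-th variable). *)
Definition bern_weight (R : realType) (I : finType) (p : R) (w : {ffun I -> bool}) : R :=
  \prod_(i : I) (if w i then p else 1 - p).

Definition bern_prob (R : realType) (I : finType) (p : R) (E : pred {ffun I -> bool}) : R :=
  \sum_(w : {ffun I -> bool} | E w) bern_weight p w.

(* Probability of an event E about (u, v), where u, v are two independent
   families of |I| i.i.d. Bern(p) variables (all 2|I| mutually independent). *)
Definition bern_prob2 (R : realType) (I : finType) (p : R)
    (E : {ffun I -> bool} -> {ffun I -> bool} -> bool) : R :=
  \sum_(u : {ffun I -> bool}) \sum_(v : {ffun I -> bool} | E u v)
     bern_weight p u * bern_weight p v.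

(* The value u_k (as a 0/1 natural number) of a family u indexed by 'I_d,
   accessed through a natural-number index k (0 if k >= d, never used). *)
Definition bitn (d : nat) (u : {ffun 'I_d -> bool}) (k : nat) : nat :=
  if insub k is Some j then nat_of_bool (u j) else 0%N.

(* Main.v *)
Require Import Defs.
From HB Require Import structures.
From mathcomp Require Import all_boot all_order all_algebra.
From mathcomp Require Import reals.
From mathcomp Require Import ring lra zify.
Set Implicit Arguments. Unset Strict Implicit. Unset Printing Implicit Defensive.
Import Order.TTheory GRing.Theory Num.Theory.
Local Open Scope ring_scope.

Section Gen.
Variable R : realType.
Variable I : finType.
Implicit Types w : {ffun I -> bool}.

Definition tog (j : I) (w : {ffun I -> bool}) : {ffun I -> bool} :=
  [ffun i => if i == j then ~~ w j else w i].

Lemma tog_j j w : tog j w j = ~~ w j. Proof. by rewrite ffunE eqxx. Qed.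
Lemma tog_ne j w i : i != j -> tog j w i = w i. Proof. by rewrite ffunE => /negbTE ->. Qed.

Lemma togK j : involutive (tog j).
Proof.
move=> w; apply/ffunP => i; case: (eqVneq i j) => [->|ij].
  by rewrite !tog_j negbK.
by rewrite !tog_ne.
Qed.

Lemma bw_ge0 (p : R) w : 0 <= p -> p <= 1 -> 0 <= bern_weight p w.
Proof. move=> h0 h1; apply: prodr_ge0 => i _; by case: (w i); rewrite // subr_ge0. Qed.

Lemma bw_sum1 (p : R) : \sum_(w : {ffun I -> bool}) @bern_weight R I p w = 1.
Proof.
rewrite /bern_weight -(bigA_distr_bigA (fun (i:I) (b:bool) => if b then p else 1 - p)) /=.
rewrite big1 // => i _; rewrite big_bool /=; ring.
Qed.

Lemma key (p : R) j (F : {ffun I -> bool} -> R) : (forall w, F (tog j w) = F w) ->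
  \sum_w bern_weight p w * ((w j)%:R * F w) = p * \sum_w bern_weight p w * F w.
Proof.
move=> hF.
pose c w := \prod_(i | i != j) (if w i then p else 1 - p).
have bwE w : bern_weight p w = (if w j then p else 1 - p) * c w by rewrite /bern_weight (bigD1 j).
have cE w : c (tog j w) = c w by apply: eq_bigr => i ij; rewrite tog_ne.
have A : \sum_(w : {ffun I -> bool} | w j) bern_weight p w * F w = p * \sum_(w : {ffun I -> bool} | ~~ w j) c w * F w.
  rewrite (reindex_inj (can_inj (togK j))) /= big_distrr /=.
  apply: eq_big => w; first by rewrite tog_j.
  move=> h; rewrite tog_j in h; rewrite bwE tog_j h /= cE hF; ring.
rewrite (bigID (fun w => w j)) /= [in RHS](bigID (fun w => w j)) /=.
rewrite [X in _ + X]big1 => [|w /negbTE ->]; last by rewrite mul0r mulr0.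
rewrite addr0 (eq_bigr (fun w => bern_weight p w * F w)) => [|w ->]; last by rewrite mul1r.
rewrite A [X in _ + X](eq_bigr (fun w => (1 - p) * (c w * F w)) ) => [|w /negbTE nw]; last by rewrite bwE nw mulrA.
rewrite -big_distrr /=. ring.
Qed.

Lemma bern_ineq (q : R) n : 0 <= q -> q <= 1 -> 1 - n%:R * q <= (1 - q) ^+ n.
Proof.
move=> h0 h1; elim: n => [|n IH]; first by rewrite expr0 mul0r subr0.
rewrite exprS; have h : (1 - q) * (1 - n%:R * q) <= (1 - q) * (1 - q) ^+ n.
  by apply: ler_wpM2l; rewrite ?subr_ge0.
have hn : 0 <= (n%:R : R) by []. apply: le_trans h; rewrite -natr1 mulrDl. have : 0 <= n%:R * (q * q) by rewrite mulr_ge0 ?mulr_ge0. nra.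
Qed.
End Gen.

Section Main.
Variable R : realType.
Variable d : nat.
Hypothesis hd : (0 < d)%N.

Lemma divlt (i : 'I_(d ^ 2)) : (i %/ d < d)%N.
Proof. by rewrite ltn_divLR // mulnn. Qed.

Definition divO (i : 'I_(d ^ 2)) : 'I_d := Ordinal (divlt i).
Definition modO (i : 'I_(d ^ 2)) : 'I_d := Ordinal (ltn_pmod i hd).

Lemma bitnE (u : {ffun 'I_d -> bool}) k (hk : (k < d)%N) : bitn u k = u (Ordinal hk).
Proof. by rewrite /bitn insubT. Qed.

Lemma divmodO_inj i j : divO i = divO j -> modO i = modO j -> i = j.
Proof.
move=> /(congr1 val) /= h1 /(congr1 val) /= h2; apply: val_inj.
by rewrite /= (divn_eq i d) (divn_eq j d) h1 h2.
Qed.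

Definition FS (S : {set 'I_(d ^ 2)}) (u v : {ffun 'I_d -> bool}) :=
  [forall i in S, ~~ (u (divO i) && v (modO i))].

Definition L (p : R) S := \sum_(u : {ffun 'I_d -> bool}) bern_weight p u *
   \sum_(v : {ffun 'I_d -> bool}) bern_weight p v * (FS S u v)%:R.

Lemma L0 p : L p set0 = 1.
Proof.
rewrite /L -[RHS](@bw_sum1 R 'I_d p); apply: eq_bigr => u _.
have -> : \sum_(v : {ffun 'I_d -> bool}) bern_weight p v * (FS set0 u v)%:R = 1.
  rewrite -[RHS](@bw_sum1 R 'I_d p); apply: eq_bigr => v _.
  have -> : FS set0 u v by apply/forallP => i; rewrite inE.
  by rewrite mulr1.
by rewrite mulr1.
Qed.

Lemma L_step (p : R) (S : {set 'I_(d ^ 2)}) e : 0 <= p -> p <= 1 -> e \in S ->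
  L p S <= (1 - p ^+ 2) * L p [set i in S | (divO i != divO e) && (modO i != modO e)].
Proof.
move=> hp0 hp1 he.
set S' := [set i in S | _]; set a := divO e; set b := modO e.
have inv1 u v : FS S' u (tog b v) = FS S' u v.
  apply: eq_forallb => i; case: (boolP (i \in S')) => //= hi.
  by rewrite inE in hi; case/and3P: hi => _ _ hb; rewrite tog_ne.
have inv2 u v : FS S' (tog a u) v = FS S' u v.
  apply: eq_forallb => i; case: (boolP (i \in S')) => //= hi.
  by rewrite inE in hi; case/and3P: hi => _ ha _; rewrite tog_ne.
have pt u v : (FS S u v)%:R <= (FS S' u v)%:R - (u a)%:R * ((v b)%:R * (FS S' u v)%:R) :> R.
  have h1 : FS S u v -> FS S' u v.
    move/forallP => h; apply/forallP => i; apply/implyP => hi; rewrite inE in hi.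
    by case/andP: hi => hiS _; exact: (implyP (h i) hiS).
  have h2 : FS S u v -> ~~ (u a && v b) := fun h => implyP (forallP h e) he.
  move: h1 h2; case: (FS S u v); case: (FS S' u v); case: (u a); case: (v b) => //= H1 H2;
  try (by have := H1 isT); try (by have := H2 isT); lra.
pose G u := \sum_(v : {ffun 'I_d -> bool}) bern_weight p v * (FS S' u v)%:R.
have hG (u : {ffun 'I_d -> bool}) : \sum_(v : {ffun 'I_d -> bool}) bern_weight p v * ((u a)%:R * ((v b)%:R * (FS S' u v)%:R))
    = (u a)%:R * (p * G u).
  have := @key R _ p b (fun v => (FS S' u v)%:R) (fun v => ltac:(by rewrite /= inv1)).
  rewrite /G => <-; rewrite big_distrr /=; apply: eq_bigr => v _; ring.
have E : \sum_(u : {ffun 'I_d -> bool}) bern_weight p u *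
   \sum_(v : {ffun 'I_d -> bool}) bern_weight p v * ((u a)%:R * ((v b)%:R * (FS S' u v)%:R))
   = p ^+ 2 * L p S'.
  rewrite (eq_bigr (fun u => p * (bern_weight p u * ((u a)%:R * G u)))); last first.
    by move=> u _; rewrite hG; ring.
  rewrite -big_distrr /= key; last first.
    by move=> u; apply: eq_bigr => v _; rewrite inv2.
  by rewrite /L expr2 mulrA.
have H : L p S <= L p S' - \sum_(u : {ffun 'I_d -> bool}) bern_weight p u *
   \sum_(v : {ffun 'I_d -> bool}) bern_weight p v * ((u a)%:R * ((v b)%:R * (FS S' u v)%:R)).
  rewrite /L -sumrB; apply: ler_sum => u _; rewrite -mulrBr; apply: ler_wpM2l; first exact: bw_ge0.
  rewrite -sumrB; apply: ler_sum => v _; rewrite -mulrBr; apply: ler_wpM2l; first exact: bw_ge0.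
  exact: pt.
rewrite E in H; apply: (le_trans H); rewrite mulrBl mul1r //.
Qed.

Lemma card_step (S : {set 'I_(d ^ 2)}) e :
  (#|S| <= #|[set i in S | (divO i != divO e) && (modO i != modO e)]| + 2 * d)%N.
Proof.
set S' := [set i in S | _]; set a := divO e; set b := modO e.
have hsub : S' \subset S by apply/subsetP => i; rewrite inE => /andP [].
have c1 : #|S| = (#|S'| + #|S :\: S'|)%N by rewrite -(cardsID S' S) (setIidPr hsub).
pose Da := [set i : 'I_(d ^ 2) | divO i == a]; pose Mb := [set i : 'I_(d ^ 2) | modO i == b].
have c2 : S :\: S' \subset Da :|: Mb.
  apply/subsetP => i; rewrite !inE; case: (i \in S) => //=.
  by case: (divO i == a); case: (modO i == b).
have c3 : (#|Da| <= d)%N.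
  rewrite -(card_in_imset (f := modO)); first by rewrite -[X in (_ <= X)%N]card_ord max_card.
  move=> i j; rewrite !inE => /eqP hi /eqP hj hm; apply: divmodO_inj => //; by rewrite hi hj.
have c4 : (#|Mb| <= d)%N.
  rewrite -(card_in_imset (f := divO)); first by rewrite -[X in (_ <= X)%N]card_ord max_card.
  move=> i j; rewrite !inE => /eqP hi /eqP hj hm; apply: divmodO_inj => //; by rewrite hi hj.
have c5 := subset_leq_card c2.
have c6 := (leq_card_setU Da Mb).1.
rewrite c1; apply: leq_add => //; apply: leq_trans c5 _; apply: leq_trans c6 _; rewrite mul2n -addnn; exact: leq_add.
Qed.

Lemma L_bound (p q : R) : 0 <= p -> p <= 1 -> 0 <= q -> q <= 1 ->
  2 * d%:R * q <= p ^+ 2 -> forall S, L p S <= (1 - q) ^+ #|S|.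
Proof.
move=> hp0 hp1 hq0 hq1 hpq.
suff H : forall n (S : {set 'I_(d ^ 2)}), (#|S| <= n)%N -> L p S <= (1 - q) ^+ #|S|.
  by move=> S; exact: H _ _ (leqnn _).
elim=> [|n IH] S hS.
  case: (set_0Vmem S) => [->|[e he]]; first by rewrite L0 cards0 expr0.
  have : (0 < #|S|)%N by apply/card_gt0P; exists e.
  lia.
case: (set_0Vmem S) => [->|[e he]]; first by rewrite L0 cards0 expr0.
set S' := [set i in S | (divO i != divO e) && (modO i != modO e)].
have hprop : S' \proper S.
  apply/properP; split.
    by apply/subsetP => i; rewrite inE => /andP [].
  by exists e => //; rewrite inE !eqxx /= andbF.
have hlt := proper_card hprop.
have IH' := IH S' ltac:(lia).
have hc := card_step S e; rewrite -/S' in hc.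
apply: (le_trans (L_step hp0 hp1 he)); rewrite -/S'.
have h1q : 0 <= 1 - q by rewrite subr_ge0.
apply: (@le_trans _ _ ((1 - q) ^+ (2 * d) * (1 - q) ^+ #|S'|)).
  apply: (@le_trans _ _ ((1 - p ^+ 2) * (1 - q) ^+ #|S'|)).
    apply: ler_wpM2l => //; rewrite subr_ge0 expr2; nra.
  apply: ler_wpM2r; first exact: exprn_ge0.
  apply: le_trans (bern_ineq _ hq0 hq1); rewrite natrM; lra.
rewrite -exprD; apply: ler_wiXn2l => //; first by rewrite lerBlDr lerDl.
by rewrite addnC.
Qed.

Definition FQ (S : {set 'I_(d ^ 2)}) (x : {ffun 'I_(d ^ 2) -> bool}) := [forall i in S, ~~ x i].

Lemma Q_eq (q : R) (S : {set 'I_(d ^ 2)}) :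
  \sum_(x : {ffun 'I_(d ^ 2) -> bool}) bern_weight q x * (FQ S x)%:R = (1 - q) ^+ #|S|.
Proof.
move: {2}#|S| (erefl #|S|) => n; elim: n S => [|n IH] S hS;
  case: (set_0Vmem S) => [ES|[e he]].
- rewrite ES cards0 expr0 -[RHS](@bw_sum1 R 'I_(d ^ 2) q); apply: eq_bigr => x _.
  have -> : FQ set0 x by apply/forallP => i; rewrite inE.
  by rewrite mulr1.
- by move: hS; rewrite (cardsD1 e) he.
- by move: hS; rewrite ES cards0.
have hS0 : #|S :\ e| = n by move: hS; rewrite (cardsD1 e) he => -[].
have hF x : FQ S x = ~~ x e && FQ (S :\ e) x.
  apply/idP/idP.
    move/forallP => h; rewrite (implyP (h e) he) /=; apply/forallP => i; apply/implyP.
    by rewrite inE => /andP [_ hi]; exact: (implyP (h i) hi).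
  case/andP => he' /forallP h; apply/forallP => i; apply/implyP => hi.
  case: (eqVneq i e) => [->//|ne]; apply: (implyP (h i)); by rewrite in_setD1 ne hi.
have inv x : FQ (S :\ e) (tog e x) = FQ (S :\ e) x.
  apply: eq_forallb => i; case: (boolP (i \in S :\ e)) => //= hi.
  by rewrite in_setD1 in hi; case/andP: hi => ne _; rewrite tog_ne.
rewrite (eq_bigr (fun x => bern_weight q x * (FQ (S :\ e) x)%:R -
                   bern_weight q x * ((x e)%:R * (FQ (S :\ e) x)%:R))); last first.
  by move=> x _; rewrite hF; case: (x e); case: (FQ _ x) => /=; ring.
rewrite sumrB (@key R _ q e (fun x => (FQ (S :\ e) x)%:R)); last by move=> x; rewrite /= inv.
by rewrite (IH (S :\ e) hS0) hS exprS hS0; ring.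
Qed.
End Main.

Unset Implicit Arguments.

Theorem lemmaD2 (R : realType) (d : nat) (p q : R)
  (hd : (1 <= d)%N) (hp0 : 0 <= p) (hp1 : p <= 1) (hq0 : 0 <= q) (hq1 : q <= 1)
  (hpq : Num.sqrt (2 * q * d%:R) <= p)
  (S : {set 'I_(d ^ 2)}) :
  bern_prob2 p (fun u v : {ffun 'I_d -> bool} =>
      (\sum_(i in S) (bitn u (i %/ d) * bitn v (i %% d)))%N == 0%N)
  <= bern_prob q (fun x : {ffun 'I_(d ^ 2) -> bool} =>
      (\sum_(i in S) nat_of_bool (x i))%N == 0%N).
Proof.
have hd' : (0 < d)%N by [].
have hpq' : 2 * d%:R * q <= p ^+ 2.
  have hx : 0 <= 2 * q * d%:R by rewrite !mulr_ge0.
  have h1 := sqr_sqrtr hx; have h0 := sqrtr_ge0 (2 * q * d%:R).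
  move: h1 h0 hpq; set s := Num.sqrt _; rewrite !expr2 => h1 h0 h2; nra.
have EL : bern_prob2 p (fun u v : {ffun 'I_d -> bool} =>
      (\sum_(i in S) (bitn u (i %/ d) * bitn v (i %% d)))%N == 0%N) = L hd' p S.
  rewrite /bern_prob2 /L; apply: eq_bigr => u _; rewrite big_distrr /= big_mkcond /=.
  apply: eq_bigr => v _.
  have -> : (\sum_(i in S) bitn u (i %/ d) * bitn v (i %% d) == 0)%N = FS hd' S u v.
    rewrite sum_nat_eq0; apply: eq_forallb => i.
    rewrite (bitnE u (divlt hd' i)) (bitnE v (ltn_pmod i hd')) muln_eq0.
    by case: (i \in S); case: (u _); case: (v _).
  by case: (FS _ _ _ _); rewrite ?mulr1 ?mulr0.
have EQ : bern_prob q (fun x : {ffun 'I_(d ^ 2) -> bool} =>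
      (\sum_(i in S) nat_of_bool (x i))%N == 0%N)
    = \sum_(x : {ffun 'I_(d ^ 2) -> bool}) bern_weight q x * (FQ S x)%:R.
  rewrite /bern_prob big_mkcond /=; apply: eq_bigr => x _.
  have -> : (\sum_(i in S) nat_of_bool (x i) == 0)%N = FQ S x.
    rewrite sum_nat_eq0; apply: eq_forallb => i.
    by case: (i \in S); case: (x i).
  by case: (FQ _ _); rewrite ?mulr1 ?mulr0.
rewrite EL EQ Q_eq; exact: L_bound.
Qed.
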